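(* Let $t\ge 3$ be an integer and let $G=(V,E)$ be a $t$-hypergraph with $|V|=s\ge 2$ vertices and $|E|=m$ hyperedges. Let $k\in\mathbb{N}$ satisfy $2^{t+2}\log(s)\le k\le s$. If \[ m \;\ge\; 3s\left(\frac{2^{t+3}\cdot s\cdot\log(s)}{k}\right)^{t-2}, \] then there exists a subset $S\subseteq V$ with $|S|\le k$ that spans at least $|S| + \frac{k}{2^{t+1}\log(s)}$ hyperedges.
   Context: A $t$-hypergraph is a hypergraph in which every hyperedge is a set of at most $t$ distinct vertices, and parallel (repeated) hyperedges are allowed and counted with multiplicity. A set of vertices $S$ spans a hyperedge $e$ if all vertices of $e$ lie in $S$. Logarithms are base 2. *)

(* Defs.v *)
From mathcomp Require Import all_boot.
From Stdlib Require Import Reals.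
Set Implicit Arguments. Unset Strict Implicit. Unset Printing Implicit Defensive.

Definition log2 (x : R) : R := (ln x / ln 2)%R.

(* A t-hypergraph on vertex set V: a multiset (seq) of hyperedges,
   each a nonempty set of at most t vertices. *)
Definition is_t_hypergraph (V : finType) (t : nat) (E : seq {set V}) : bool :=
  all (fun e : {set V} => (0 < #|e|) && (#|e| <= t)) E.

Definition spanned (V : finType) (E : seq {set V}) (S : {set V}) : nat :=
  count (fun e : {set V} => e \subset S) E.

(* Main.v *)
Require Import Defs.
From mathcomp Require Import all_boot.
From Stdlib Require Import Reals.
From mathcomp Require Import ssreflect ssrbool ssrnat eqtype fintype finset bigop.
From mathcomp Require Import zify.
From Stdlib Require Import Lia.
Set Implicit Arguments. Unset Strict Implicit. Unset Printing Implicit Defensive.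
Lemma top_set (V : finType) (w : V -> nat) u : u <= #|V| ->
  exists U : {set V}, #|U| = u /\ forall v y, v \in U -> y \notin U -> w y <= w v.
Proof.
elim: u => [|u IH] hu.
  by exists set0; split; [rewrite cards0 | move=> v y; rewrite in_set0].
have [U [cU tU]] := IH (ltnW hu).
have : ~~ (setT \subset U).
  apply/negP=> /subset_leq_card; rewrite cardsT cU; lia.
case/subsetPn=> x0 _ x0U.
pose x := [arg max_(x > x0 | x \notin U) w x].
have [xU xmax] : x \notin U /\ forall y, y \notin U -> w y <= w x.
  by rewrite /x; case: arg_maxnP => // z zU zm; split.
exists (x |: U); split; first by rewrite cardsU1 xU cU.
move=> v y; rewrite !in_setU1 negb_or => /orP[/eqP->|vU] /andP[yx yU].
  exact: xmax.
exact: tU.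
Qed.

Lemma top_u (V : finType) (w : V -> nat) u : u <= #|V| ->
  exists U : {set V}, #|U| = u /\ u * \sum_v w v <= #|V| * \sum_(v in U) w v.
Proof.
move=> hu; have [U [cU tU]] := top_set w hu.
exists U; split=> //.
set S := \sum_(v in U) w v.
have hy : forall y, y \notin U -> u * w y <= S.
  move=> y yU; rewrite -cU -sum_nat_const /S; apply: leq_sum => v vU; exact: tU.
rewrite (bigID (fun v => v \in U)) /= -/S mulnDr.
have : u * \sum_(i | i \notin U) w i <= #|[set y | y \notin U]| * S.
  rewrite big_distrr /= -sum_nat_const.
  rewrite [X in _ <= X](eq_bigl (fun y => y \notin U)); last by move=> y; rewrite inE.
  by apply: leq_sum => y yU; apply: hy.
have -> : #|[set y | y \notin U]| = #|V| - u.
  have := cardsC U; rewrite cU.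
  have -> : [set y | y \notin U] = ~: U by apply/setP=> y; rewrite !inE.
  lia.
move=> h; have : u * S + (#|V| - u) * S = #|V| * S by rewrite -mulnDl subnKC.
by move=> <-; rewrite leq_add2l.
Qed.
Definition sp (V I : finType) (P : {set I}) (f : I -> {set V}) (S : {set V}) :=
  #|[set i in P | f i \subset S]|.

Lemma card_sum (I : finType) (B : {set I}) (p : pred I) :
  #|[set i in B | p i]| = \sum_(i in B) (p i : nat).
Proof.
rewrite -sum1_card.
rewrite [RHS](eq_bigr (fun i => if p i then 1 else 0)); last by move=> i _; case: (p i).
rewrite -big_mkcondr; apply: eq_bigl => i; by rewrite inE.
Qed.

Lemma dcount (V I : finType) (B : {set I}) (f : I -> {set V}) (A : {set V}) :
  \sum_(v in A) #|[set i in B | v \in f i]| = \sum_(i in B) #|f i :&: A|.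
Proof.
under eq_bigr do rewrite card_sum.
rewrite exchange_big /=; apply: eq_bigr => i _.
rewrite -(card_sum A (fun v => v \in f i)); apply: eq_card => v; by rewrite !inE andbC.
Qed.
Lemma one_level (V I : finType) (P : {set I}) (f : I -> {set V}) q u :
  u <= #|V| -> (forall i, i \in P -> #|f i| <= q.+3) ->
  exists U : {set V}, #|U| = u /\
    u * #|P| <= #|V| * #|[set i in P | #|f i :\: U| <= q.+2]|.
Proof.
move=> hu hf.
pose Big := [set i in P | #|f i| == q.+3].
pose w v := #|[set i in Big | v \in f i]|.
have [U [cU hU]] := top_u w hu.
exists U; split=> //.
have sw : \sum_v w v = q.+3 * #|Big|.
  have := dcount Big f setT.
  rewrite (eq_bigl (fun v => true)); last by move=> v; rewrite inE.
  move=> ->; rewrite mulnC -sum_nat_const; apply: eq_bigr => i; rewrite inE => /andP[_ /eqP <-].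
  by rewrite setIT.
pose Hit := [set i in Big | f i :&: U != set0].
have sU : \sum_(v in U) w v <= q.+3 * #|Hit|.
  rewrite dcount card_sum big_distrr /=; apply: leq_sum => i.
  rewrite inE => /andP[iP /eqP fi].
  case: eqP => [->|_]; first by rewrite cards0.
  by rewrite muln1 -fi subset_leq_card // subsetIl.
have hB : u * #|Big| <= #|V| * #|Hit|.
  have := leq_trans hU (leq_mul (leqnn #|V|) sU).
  rewrite sw mulnCA [X in _ <= X]mulnCA leq_pmul2l //.
have hsub : Hit :|: (P :\: Big) \subset [set i in P | #|f i :\: U| <= q.+2].
  apply/subsetP=> i; rewrite !inE => /orP[/andP[/andP[iP /eqP fi] ne]|/andP[nb iP]];
    rewrite iP /=.
    rewrite cardsD fi; have : 0 < #|f i :&: U| by rewrite card_gt0.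
    have : #|f i :&: U| <= #|f i| by rewrite subset_leq_card // subsetIl.
    rewrite fi; lia.
  have := hf i iP; rewrite iP /= in nb.
  have : #|f i :\: U| <= #|f i| by rewrite subset_leq_card // subsetDl.
  move: nb; case: (#|f i| == q.+3) /eqP; lia.
have hdis : #|Hit :|: (P :\: Big)| = #|Hit| + #|P :\: Big|.
  rewrite cardsU; have -> : Hit :&: (P :\: Big) = set0.
    apply/setP=> i; rewrite !inE.
    by case: (i \in P) (#|f i| == q.+3) => [] []; rewrite /= ?andbF.
  by rewrite (cards0 I) subn0.
have hP : #|P| = #|Big| + #|P :\: Big|.
  rewrite -(cardsID Big P); congr (_ + _); apply: eq_card => i; rewrite !inE.
  by case: (i \in P).
apply: (leq_trans _ (leq_mul (leqnn _) (subset_leq_card hsub))).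
rewrite hdis hP mulnDr mulnDr; apply: leq_add => //.
by rewrite leq_mul2r hu orbT.
Qed.
Lemma levels (V I : finType) u q : u <= #|V| ->
  forall (P : {set I}) (f : I -> {set V}), (forall i, i \in P -> #|f i| <= q.+2) ->
  exists U : {set V}, #|U| <= q * u /\
    u ^ q * #|P| <= #|V| ^ q * #|[set i in P | #|f i :\: U| <= 2]|.
Proof.
move=> hu; elim: q => [|q IH] P f hf.
  exists set0; split; first by rewrite cards0.
  rewrite !expn0 !mul1n subset_leq_card //; apply/subsetP=> i iP.
  by rewrite inE iP setD0 hf.
have [U1 [cU1 h1]] := one_level hu hf.
pose A1 := [set i in P | #|f i :\: U1| <= q.+2].
have hA : forall i, i \in A1 -> #|f i :\: U1| <= q.+2 by move=> i; rewrite inE => /andP[].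
have [U2 [cU2 h2]] := IH A1 (fun i => f i :\: U1) hA.
exists (U1 :|: U2); split.
  by rewrite (leq_trans (leq_card_setU _ _)) // cU1 mulSn leq_add2l.
have hs : [set i in A1 | #|f i :\: U1 :\: U2| <= 2] \subset
          [set i in P | #|f i :\: (U1 :|: U2)| <= 2].
  by apply/subsetP=> i; rewrite !inE setDDl => /andP[/andP[-> _] ->].
have e1 : u ^ q.+1 * #|P| <= u ^ q * (#|V| * #|A1|).
  by rewrite expnS (mulnC u) -mulnA leq_mul2l h1 orbT.
apply: (leq_trans e1); rewrite mulnCA expnS -mulnA leq_mul2l; apply/orP; right.
exact: leq_trans h2 (leq_mul (leqnn _) (subset_leq_card hs)).
Qed.
Definition nbr (V I : finType) (Q : {set I}) (f : I -> {set V}) (X : {set V}) : {set V} :=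
  [set y | [exists j in Q, (y \in f j) && (f j :&: X != set0)]].

Definition ball (V I : finType) (Q : {set I}) (f : I -> {set V}) (r : V) (n : nat) :=
  iter n (fun X => X :|: nbr Q f X) [set r].

Lemma two_elems (V : finType) (A : {set V}) : 0 < #|A| <= 2 ->
  exists x y, A = [set x; y].
Proof.
case/andP=> /card_gt0P[x xA] h2.
have := cardsD1 x A; rewrite xA add1n => e.
case: (set_0Vmem (A :\ x)) => [e0|[y yA]].
  exists x, x; rewrite setUid; apply/setP=> z; rewrite inE.
  case: (eqVneq z x) => [->//|zx].
  by have := in_set0 z; rewrite -e0 !inE zx /= => ->.
exists x, y; apply/eqP; rewrite eq_sym eqEcard.
move: yA; rewrite !inE => /andP[yx yA].
rewrite cards2 eq_sym yx.
apply/andP; split; last by rewrite h2.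
by apply/subsetP=> z; rewrite !inE => /orP[]/eqP->.
Qed.

Lemma ball_mono (V I : finType) (Q : {set I}) (f : I -> {set V}) r i j :
  i <= j -> ball Q f r i \subset ball Q f r j.
Proof.
move=> /subnK <-; elim: (j - i) => [|n IH]; first by rewrite add0n.
apply: (subset_trans IH); rewrite addSn /=; exact: subsetUl.
Qed.

Lemma e4R (R : nat) : 4 * R + 4 = R.+1 + R.+1 + R.+1 + R.+1.
Proof. lia. Qed.
Lemma tree_extract (V I : finType) (Q : {set I}) (f : I -> {set V}) (r : V) (R : nat) :
  (forall i, i \in Q -> 0 < #|f i| <= 2) ->
  #|ball Q f r R| + 1 <= sp Q f (ball Q f r R) ->
  exists T : {set V}, #|T| <= 4 * R + 4 /\ #|T| + 1 <= sp Q f T.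
Proof.
move=> hf hR.
set B := ball Q f r.
have BS : forall i, B i.+1 = B i :|: nbr Q f (B i) by [].
have B0 : B 0 = [set r] by [].
have rB : forall i, r \in B i.
  by move=> i; apply: (subsetP (ball_mono Q f r (leq0n i))); rewrite /ball /= set11.
pose dp y := find (fun i => y \in B i) (iota 0 R.+1).
have dp_le : forall y i, y \in B i -> dp y <= i.
  move=> y i yi; rewrite leqNgt; apply/negP=> lt.
  have hs : i < size (iota 0 R.+1).
    by apply: (leq_trans lt); rewrite find_size.
  have := before_find 0 lt; rewrite nth_iota ?add0n ?yi //.
  by rewrite size_iota in hs.
have dpB : forall y, y \in B R -> y \in B (dp y) /\ dp y <= R.
  move=> y yB; have hh : has (fun i => y \in B i) (iota 0 R.+1).
    by apply/hasP; exists R; rewrite // mem_iota add0n ltnSn andbT.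
  split; last exact: dp_le.
  have := nth_find 0 hh; rewrite nth_iota ?add0n //.
  by have := hh; rewrite has_find size_iota.
have dp_lt : forall y i, i < dp y -> y \notin B i.
  move=> y i lt; apply/negP=> yi; have := dp_le _ _ yi; rewrite leqNgt lt //.
have dp_r : dp r = 0 by apply/eqP; rewrite -leqn0 (dp_le _ _ (rB 0)).
have [i0 _] : exists i0 : I, i0 \in Q.
  have : 0 < sp Q f (B R) by apply: leq_trans hR; rewrite addn1.
  by rewrite /sp => /card_gt0P[j]; rewrite inE => /andP[jQ _]; exists j.
pose pk y := [pick j in Q | (y \in f j) && (f j :&: B (dp y).-1 != set0)].
pose tau y := odflt i0 (pk y).
pose par y := if pk y is Some j then
                (if [pick x in f j :&: B (dp y).-1] is Some x then x else y) else y.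
have par_r : par r = r.
  rewrite /par /pk dp_r /=; case: pickP => [j _|_] //.
  case: pickP => [x|_] //; rewrite inE => /andP[_].
  by rewrite /B /ball /= inE => /eqP.
have KP : forall y, y \in B R -> y != r ->
    [/\ tau y \in Q, f (tau y) = [set y; par y], par y \in B R & dp (par y) < dp y].
  move=> y yB yr; have [yd dR] := dpB y yB.
  case edp: (dp y) => [|i].
    by move: yd; rewrite edp B0 inE (negbTE yr).
  have yi : y \notin B i by apply: dp_lt; rewrite edp.
  move: yd; rewrite edp BS in_setU (negbTE yi) /= inE => /existsP[j /andP[jQ /andP[yj nj]]].
  rewrite /tau /par /pk edp /=.
  case: pickP => [j0 /andP[j0Q /andP[yj0 nj0]] | none]; last first.
    by have := none j; rewrite jQ yj nj.
  case: pickP => [x /setIP[xj0 xBi] | none2]; last first.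
    by case/set0Pn: nj0 => x; rewrite none2.
  have xy : x != y by apply/negP=> /eqP exy; move: yi; rewrite -exy xBi.
  have xBR : x \in B R.
    apply: (subsetP (ball_mono Q f r _)) xBi; rewrite -ltnS -edp; exact: leqW.
  split=> //.
  - apply/eqP; rewrite eq_sym eqEcard; apply/andP; split.
      by apply/subsetP=> z; rewrite !inE => /orP[]/eqP->.
    by rewrite cards2 eq_sym xy; case/andP: (hf j0 j0Q).
  - by rewrite ltnS dp_le.
have parB : forall y, y \in B R -> par y \in B R.
  move=> y yB; case: (eqVneq y r) => [->|yr]; first by rewrite par_r.
  by case: (KP y yB yr).
have iterB : forall m y, y \in B R -> iter m par y \in B R.
  by move=> m y yB; elim: m => [|m IH] //=; apply: parB.
have iter_r : forall m y, y \in B R -> dp y <= m -> iter m par y = r.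
  elim=> [|m IH] y yB hd.
    have [yd _] := dpB y yB; move: yd; rewrite leqn0 in hd; rewrite (eqP hd) B0 inE.
    by move/eqP.
  rewrite iterSr; case: (eqVneq y r) => [->|yr].
    by rewrite par_r; apply: IH; rewrite ?dp_r ?rB.
  have [_ _ pB plt] := KP y yB yr; apply: IH => //; rewrite -ltnS; exact: leq_trans plt hd.
pose Pth y := (fun m : 'I_R.+1 => iter m par y) @: [set: 'I_R.+1].
have Pth_card : forall y, #|Pth y| <= R.+1.
  by move=> y; rewrite (leq_trans (leq_imset_card _ _)) // cardsT card_ord.
have Pth_self : forall y, y \in Pth y.
  by move=> y; apply/imsetP; exists ord0.
have Pth_r : forall y, y \in B R -> r \in Pth y.
  move=> y yB; have [_ dR] := dpB y yB.
  apply/imsetP; exists (Ordinal (n:=R.+1) (m:=dp y) dR) => //.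
  by rewrite /= iter_r.
have Pth_sub : forall y, y \in B R -> Pth y \subset B R.
  by move=> y yB; apply/subsetP=> x /imsetP[m _ ->]; apply: iterB.
have Pth_par : forall y x, y \in B R -> x \in Pth y -> par x \in Pth y.
  move=> y x yB /imsetP[m _ ->]; rewrite -iterS.
  case: (ltnP m.+1 R.+1) => hm.
    by apply/imsetP; exists (Ordinal hm).
  have [_ dR] := dpB y yB.
  rewrite iter_r //; first exact: Pth_r.
  by apply: (leq_trans dR); apply: leq_trans (leqnSn R) hm.
have rBR := rB R.
pose A := [set j in Q | f j \subset B R].
pose Tr := tau @: (B R :\ r).
have cTr : #|Tr| + 1 <= #|B R|.
  rewrite (cardsD1 r (B R)) rBR add1n addn1 ltnS; exact: leq_imset_card.
have c2 : 2 <= #|A :\: Tr|.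
  rewrite cardsD; have : #|A :&: Tr| <= #|Tr| by rewrite subset_leq_card // subsetIr.
  have : #|A| = sp Q f (B R) by [].
  move: hR; rewrite -/B; lia.
have [j1 j1A] : exists j1, j1 \in A :\: Tr.
  by apply/card_gt0P; apply: leq_trans c2.
have [j2 j2A] : exists j2, j2 \in (A :\: Tr) :\ j1.
  apply/card_gt0P; move: c2; rewrite (cardsD1 j1 (A :\: Tr)) j1A; lia.
move: j2A; rewrite !inE => /andP[j21 /andP[j2Tr /andP[j2Q fj2]]].
move: j1A; rewrite !inE => /andP[j1Tr /andP[j1Q fj1]].
have [x1 [y1 e1]] := two_elems (hf j1 j1Q).
have [x2 [y2 e2]] := two_elems (hf j2 j2Q).
have x1B : x1 \in B R by apply: (subsetP fj1); rewrite e1 set21.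
have y1B : y1 \in B R by apply: (subsetP fj1); rewrite e1 set22.
have x2B : x2 \in B R by apply: (subsetP fj2); rewrite e2 set21.
have y2B : y2 \in B R by apply: (subsetP fj2); rewrite e2 set22.
pose T := Pth x1 :|: Pth y1 :|: Pth x2 :|: Pth y2.
have TB : T \subset B R.
  by rewrite !subUset !Pth_sub.
have Tpar : forall x, x \in T -> par x \in T.
  move=> x; rewrite !in_setU => /orP[/orP[/orP[h|h]|h]|h].
  - by rewrite (Pth_par x1) ?orTb.
  - by rewrite (Pth_par y1) ?orTb ?orbT.
  - by rewrite (Pth_par x2) ?orTb ?orbT.
  - by rewrite (Pth_par y2) ?orbT.
have rT : r \in T by rewrite !in_setU Pth_r.
have fj1T : f j1 \subset T.
  by rewrite e1; apply/subsetP=> z /set2P[]->; rewrite /T !in_setU Pth_self ?orbT.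
have fj2T : f j2 \subset T.
  by rewrite e2; apply/subsetP=> z /set2P[]->; rewrite /T !in_setU Pth_self ?orbT.
exists T; split.
  apply: (leq_trans (leq_card_setU _ _)).
  rewrite e4R.
  apply: leq_add; last exact: Pth_card.
  apply: (leq_trans (leq_card_setU _ _)); apply: leq_add; last exact: Pth_card.
  apply: (leq_trans (leq_card_setU _ _)); apply: leq_add; exact: Pth_card.
have TrB : forall y, y \in T :\ r -> y \in B R /\ y != r.
  by move=> y /setD1P[yr yT]; split=> //; apply: (subsetP TB).
have inj : {in T :\ r &, injective tau}.
  move=> y z /TrB[yB yr] /TrB[zB zr] e.
  apply/eqP; apply/negP=> /negP yz.
  have [_ fy _ py] := KP y yB yr; have [_ fz _ pz] := KP z zB zr.
  have ef : [set y; par y] = [set z; par z] by rewrite -fy -fz e.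
  have : y \in [set z; par z] by rewrite -ef set21.
  case/set2P=> [eyz|eyp]; first by rewrite eyz eqxx in yz.
  have : z \in [set y; par y] by rewrite ef set21.
  case/set2P=> [ezy|ezp]; first by rewrite ezy eqxx in yz.
  move: py pz; rewrite -eyp -ezp => h1 h2.
  by have := ltn_trans h1 h2; rewrite ltnn.
pose X := tau @: (T :\ r).
have cX : #|X| = #|T :\ r| := card_in_imset inj.
have XTr : X \subset Tr.
  apply: imsetS; apply/subsetP=> y /setD1P[yr yT]; apply/setD1P; split=> //.
  exact: (subsetP TB).
have cY : #|[set j1; j2]| = 2 by rewrite cards2 eq_sym j21.
have dis : X :&: [set j1; j2] = set0.
  apply/setP=> j; rewrite !inE; apply/negP=> /andP[jX /orP[]/eqP ej].
  - by move: j1Tr; rewrite -ej (subsetP XTr _ jX).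
  - by move: j2Tr; rewrite -ej (subsetP XTr _ jX).
have sub : X :|: [set j1; j2] \subset [set j in Q | f j \subset T].
  apply/subsetP=> j; rewrite in_setU => /orP[/imsetP[y yT ->]|/set2P[]->].
  - have [yB yr] := TrB y yT.
    have [tQ ft _ _] := KP y yB yr.
    rewrite inE tQ ft /=; apply/subsetP=> z /set2P[]->.
      by case/setD1P: yT.
    by apply: Tpar; case/setD1P: yT.
  - by rewrite inE j1Q fj1T.
  - by rewrite inE j2Q fj2T.
have := subset_leq_card sub.
rewrite cardsU dis (cards0 I) subn0 cX cY.
have := cardsD1 r T; rewrite rT.
rewrite /sp; move: (#|T :\ r|) (#|T|) => a b; clear; lia.
Qed.
Lemma ball_growth (V I : finType) (Q : {set I}) (f : I -> {set V}) (W : {set V}) (r : V) :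
  (forall i, i \in Q -> #|f i| <= 2) -> (forall i, i \in Q -> f i \subset W) -> r \in W ->
  (forall v, v \in W -> 5 <= #|[set i in Q | v \in f i]|) ->
  exists R, 2 ^ R <= 2 * #|V| /\ #|ball Q f r R| + 1 <= sp Q f (ball Q f r R).
Proof.
move=> hf hW rW hdeg.
set B := ball Q f r.
have BS : forall i, B i.+1 = B i :|: nbr Q f (B i) by [].
have B0 : #|B 0| = 1 by rewrite /B /ball /= cards1.
have BW : forall i, B i \subset W.
  elim=> [|i IH]; first by rewrite /B /ball /= sub1set.
  rewrite BS subUset IH /=; apply/subsetP=> y; rewrite inE => /existsP[j /andP[jQ /andP[yj _]]].
  exact: (subsetP (hW j jQ)).
have grow : forall i, 5 * #|B i| <= 2 * sp Q f (B i.+1).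
  move=> i.
  have h1 : 5 * #|B i| <= \sum_(v in B i) #|[set j in Q | v \in f j]|.
    rewrite mulnC -sum_nat_const; apply: leq_sum => v vB; apply: hdeg; exact: (subsetP (BW i)).
  apply: (leq_trans h1); rewrite dcount /sp card_sum big_distrr /=; apply: leq_sum => j jQ.
  case: (eqVneq (f j :&: B i) set0) => [->|ne]; first by rewrite (cards0 V).
  have -> : f j \subset B i.+1.
    apply/subsetP=> y yj; rewrite BS in_setU inE; apply/orP; right.
    by apply/existsP; exists j; rewrite jQ yj ne.
  by rewrite muln1; apply: leq_trans (hf j jQ); rewrite subset_leq_card // subsetIl.
have grow2 : forall i, (forall j, j <= i -> sp Q f (B j) <= #|B j|) -> 2 ^ i <= #|B i|.
  elim=> [|n IH] h; first by rewrite B0.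
  have h1 := IH (fun j hj => h j (leqW hj)).
  have h2 := h n.+1 (leqnn _).
  have h3 := grow n.
  rewrite expnS; move: h1 h2 h3; move: (2 ^ n) (#|B n|) (#|B n.+1|) (sp Q f (B n.+1)).
  clear; move=> a b c d; lia.
have exR : exists i, #|B i| + 1 <= sp Q f (B i).
  have [h|h] := boolP [forall j : 'I_(#|V|).+1, sp Q f (B j) <= #|B j|].
    have h2 := grow2 #|V| (fun j hj => (forallP h) (Ordinal (n:=(#|V|).+1) (m:=j) hj)).
    have h1 : #|B #|V| | <= #|V| := max_card _.
    have h3 := ltn_expl #|V| (ltnSn 1); exfalso; move: h1 h2 h3.
    move: (#|B #|V| |) => b; move: (2 ^ #|V|) => a; move: #|V| => c; clear; lia.
  case/forallPn: h => j hj; exists j; move: hj; rewrite -ltnNge addn1; done.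
case: (ex_minnP exR) => R hR minR.
exists R; split=> //.
have small : forall i, i < R -> 2 ^ i <= #|B i|.
  move=> i iR; apply: grow2 => j ji; rewrite leqNgt; apply/negP=> hj.
  have := minR j; rewrite addn1 hj => /(_ isT) Rj.
  by have := leq_trans (leq_ltn_trans ji iR) Rj; rewrite ltnn.
case: R hR minR small => [|R] _ _ small.
  by rewrite expn0 muln_gt0 /=; apply/card_gt0P; exists r.
rewrite expnS leq_mul2l /=; apply: leq_trans (small R (ltnSn R)) _.
exact: max_card.
Qed.
Lemma core (V I : finType) (P : {set I}) (f : I -> {set V}) :
  (forall i, i \in P -> 0 < #|f i|) -> 4 * #|V| + 1 <= #|P| ->
  exists (W : {set V}) r, r \in W /\
    forall v, v \in W -> 5 <= #|[set i in [set i in P | f i \subset W] | v \in f i]|.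
Proof.
move=> hf hP.
have spT : sp P f setT = #|P|.
  by apply: eq_card => i; rewrite !inE subsetT andbT.
have hT : 4 * #|[set: V]| + 1 <= sp P f setT by rewrite spT cardsT.
case: (@arg_minnP _ setT (fun W : {set V} => 4 * #|W| + 1 <= sp P f W) (fun W => #|W|) hT) => W hW minW.
have [r rW] : exists r, r \in W.
  apply/set0Pn; apply/negP=> /eqP W0; move: hW; rewrite W0 (cards0 V) /sp.
  have -> : [set i in P | f i \subset set0] = set0.
    apply/setP=> i; rewrite !inE; apply/negP=> /andP[iP].
    by rewrite subset0 => /eqP fi; have := hf i iP; rewrite fi (cards0 V).
  by rewrite (cards0 I).
exists W, r; split=> // v vW.
set D := [set i in [set i in P | f i \subset W] | v \in f i].
have split : sp P f W = sp P f (W :\ v) + #|D|.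
  rewrite /sp -(cardsID [set i | v \in f i] [set i in P | f i \subset W]) addnC.
  congr (_ + _); apply: eq_card => i; rewrite !inE ?subsetD1.
    by case: (i \in P) (f i \subset W) (v \in f i) => [] [] [].
  by case: (i \in P) (f i \subset W) (v \in f i) => [] [] [].
have cWv : #|W| = #|W :\ v| + 1 by rewrite (cardsD1 v W) vW add1n addn1.
rewrite leqNgt; apply/negP=> small.
have h : 4 * #|W :\ v| + 1 <= sp P f (W :\ v).
  move: hW small; rewrite split cWv; move: (#|D|) (sp P f (W :\ v)) (#|W :\ v|).
  clear; move=> a b c; lia.
have := minW _ h; rewrite cWv; move: (#|W :\ v|); clear; move=> a; lia.
Qed.
Lemma moore (V I : finType) (P : {set I}) (f : I -> {set V}) :
  (forall i, i \in P -> 0 < #|f i| <= 2) -> 4 * #|V| + 1 <= #|P| ->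
  exists T : {set V}, #|T| <= 4 * trunc_log 2 #|V| + 8 /\ #|T| + 1 <= sp P f T.
Proof.
move=> hf hP.
have [W [r [rW hdeg]]] := core (fun i iP => (andP (hf i iP)).1) hP.
pose Q := [set i in P | f i \subset W].
have hfQ : forall i, i \in Q -> 0 < #|f i| <= 2 by move=> i; rewrite inE => /andP[iP _]; apply: hf.
have hf2 : forall i, i \in Q -> #|f i| <= 2 by move=> i /hfQ /andP[].
have hW : forall i, i \in Q -> f i \subset W by move=> i; rewrite inE => /andP[].
have [R [hR2 hRb]] := ball_growth hf2 hW rW hdeg.
have [T [cT sT]] := tree_extract hfQ hRb.
exists T; split.
  have n0 : 0 < #|V| by apply/card_gt0P; exists r.
  have : R <= (trunc_log 2 #|V|).+1.
    rewrite -trunc_log2_double // -mul2n; exact: trunc_log_max.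
  move: cT; move: (trunc_log 2 #|V|) #|T| => a b; clear; lia.
apply: leq_trans sT _; apply: subset_leq_card; apply/subsetP=> i; rewrite !inE.
by case/andP=> /andP[-> _] ->.
Qed.

Lemma greedy (V I : finType) (P : {set I}) (f : I -> {set V}) :
  (forall i, i \in P -> #|f i| <= 2) -> forall g,
  4 * #|V| + 1 + g * ((4 * trunc_log 2 #|V| + 8).+1) <= #|P| ->
  exists T : {set V}, #|T| <= g * (4 * trunc_log 2 #|V| + 8) /\ #|T| + g <= sp P f T.
Proof.
move=> hf; set l := 4 * trunc_log 2 #|V| + 8.
elim=> [|g IH] hg.
  by exists set0; rewrite (cards0 V) mul0n addn0.
have [T [cT sT]] : exists T : {set V}, #|T| <= g * l /\ #|T| + g <= sp P f T.
  apply: IH; apply: leq_trans hg; rewrite leq_add2l leq_mul2r leqnSn orbT //.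
case: (leqP (#|T| + g.+1) (sp P f T)) => hT.
  exists T; split=> //; apply: leq_trans cT _; rewrite leq_mul2r leqnSn orbT //.
pose P' := [set i in P | ~~ (f i \subset T)].
pose f' i := f i :\: T.
have hf' : forall i, i \in P' -> 0 < #|f' i| <= 2.
  move=> i; rewrite inE => /andP[iP nsub]; apply/andP; split.
    rewrite card_gt0; apply/negP=> /eqP e; move: nsub; rewrite -setD_eq0 -/(f' i) e eqxx //.
  by apply: leq_trans (hf i iP); rewrite subset_leq_card // subsetDl.
have cP : #|P| = sp P f T + #|P'|.
  rewrite /sp -(cardsID [set i | f i \subset T] P).
  congr (_ + _); apply: eq_card => i; rewrite /P' !inE; case: (i \in P); rewrite ?andbT ?andbF //.
have hP' : 4 * #|V| + 1 <= #|P'|.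
  clear IH; move: hg; rewrite cP mulnS (mulSn g l); move: cT hT.
  move: (#|P'|) (sp P f T) (#|T|) (g * l) (4 * #|V| + 1) => a b c d h.
  clear; lia.
have [T' [cT' sT']] := moore hf' hP'.
exists (T :|: T'); split.
  apply: leq_trans (leq_card_setU _ _) _; rewrite mulSn addnC leq_add //.
have hsub : [set i in P | f i \subset T] :|: [set i in P' | f' i \subset T'] \subset
            [set i in P | f i \subset T :|: T'].
  apply/subsetP=> i; rewrite !inE => /orP[/andP[-> h]|/andP[/andP[-> _] h]] /=.
    exact: subset_trans h (subsetUl _ _).
  apply/subsetP=> x xf; rewrite in_setU; case: (boolP (x \in T)) => //= xT.
  by apply: (subsetP h); rewrite /f' inE xT.
have hdis : [set i in P | f i \subset T] :&: [set i in P' | f' i \subset T'] = set0.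
  apply/setP=> i; rewrite !inE.
  by case: (i \in P) (f i \subset T) => [] []; rewrite ?andbF.
have := subset_leq_card hsub; rewrite cardsU hdis (cards0 I) subn0.
rewrite -/(sp P f T) -/(sp P' f' T') -/(sp P f (T :|: T')).
move: sT sT' (leq_of_leqif (leq_card_setU T T')).
move: (sp P f T) (sp P' f' T') (sp P f (T :|: T')) #|T| #|T'| #|T :|: T'| => a b c d e h.
clear; lia.
Qed.
Lemma arith1 (a D l P k : nat) : 5 <= l -> a * (16 * l) <= k -> (D - 1) * P <= k ->
  16 * l <= P -> 2 * P <= k -> 1 <= D -> a + (a + D) * (4 * l + 9) <= k.
Proof.
move=> hl ha hD hP hk hD1.
have e1 : 16 * (a * (4 * l + 10)) <= 6 * k by nia.
have e2 : 16 * ((D - 1) * (4 * l + 9)) <= 6 * k by nia.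
have e3 : 16 * (4 * l + 9) <= 3 * k by nia.
nia.
Qed.
Lemma two_q q : 2 * q <= 2 ^ q.
Proof. elim: q => [|q IH] //; rewrite expnS; case: q IH => [|q] IH //; lia. Qed.

Lemma three_q q : 3 * q <= 2 ^ q.+1.
Proof.
elim: q => [|q IH] //; rewrite expnS.
case: q IH => [|q] IH //.
have : 3 <= 2 ^ q.+2 by have := two_q q.+2; lia.
lia.
Qed.

Lemma spanned_card (V : finType) (E : seq {set V}) (S : {set V}) :
  spanned E S = #|[set i : 'I_(size E) | nth set0 E i \subset S]|.
Proof.
rewrite /spanned -sum1_count (big_nth set0) big_mkord.
by rewrite -sum1_card; apply: eq_bigl => i; rewrite inE.
Qed.

Lemma key_exp (q n m k u lam : nat) : 1 <= q -> 0 < k ->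
  3 * n * (2 ^ (q + 5) * n * lam) ^ q <= m * k ^ q ->
  2 * k <= u * 2 ^ (q + 5) * lam ->
  n ^ q * (6 * n) <= u ^ q * m.
Proof.
move=> hq hk hm hu.
have hk' : 0 < k ^ q by rewrite expn_gt0 hk.
rewrite -(leq_pmul2r hk').
have h1 : (2 * k) ^ q <= (u * 2 ^ (q + 5) * lam) ^ q by rewrite leq_exp2r.
have h2 : 2 * k ^ q <= (2 * k) ^ q.
  rewrite expnMn leq_mul2r; apply/orP; right.
  case: (q) hq => [|q0] // _; rewrite expnS; have := expn_gt0 2 q0; lia.
have e1 : u ^ q * m * k ^ q >= u ^ q * (3 * n * (2 ^ (q + 5) * n * lam) ^ q).
  by rewrite -(mulnA (u ^ q) m) leq_mul2l hm orbT.
have e2 : u ^ q * (3 * n * (2 ^ (q + 5) * n * lam) ^ q) = 3 * n * n ^ q * (u * 2 ^ (q + 5) * lam) ^ q.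
  rewrite !expnMn; nia.
apply: leq_trans e1; rewrite e2.
have : n ^ q * (6 * n) * k ^ q = 3 * n * n ^ q * (2 * k ^ q) by nia.
move=> ->; rewrite leq_mul2l; apply/orP; right; exact: leq_trans h2 h1.
Qed.
Lemma H1a (z q lam : nat) : 2 * q <= z -> 2 * (16 * q * lam) <= z * 16 * lam.
Proof. nia. Qed.
Lemma H2a (u q lam : nat) : 3 * u * (16 * q * lam) = u * 16 * lam * (3 * q).
Proof. nia. Qed.
Lemma H3a (u z lam : nat) : u * (z * 16) * lam = u * 16 * lam * z.
Proof. nia. Qed.
Lemma H4a (q w lam : nat) : q * w * (16 * lam) = w * (16 * q * lam).
Proof. nia. Qed.
Lemma H5a (z q lam : nat) : 1 <= q -> 2 * q <= z -> 16 * lam <= z * 8 * lam.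
Proof. nia. Qed.
Lemma main_nat (V : finType) (E : seq {set V}) (t k : nat) :
  3 <= t -> is_t_hypergraph t E -> k <= #|V| ->
  5 <= trunc_log 2 #|V| ->
  2 ^ (t + 2) * trunc_log 2 #|V| <= k ->
  3 * #|V| * (2 ^ (t + 3) * #|V| * trunc_log 2 #|V|) ^ (t - 2) <= size E * k ^ (t - 2) ->
  exists S : {set V}, #|S| <= k /\
    #|S| + (k %/ (2 ^ (t + 1) * trunc_log 2 #|V|) + 1) <= spanned E S.
Proof.
move=> ht hE hkn hl hk hm.
set n := #|V| in hkn hk hm *; set lam := trunc_log 2 n in hl hk hm *.
have [q tq] : exists q, t = q.+2 by exists (t - 2); lia.
have q1 : 1 <= q by lia.
rewrite tq in hk hm *; rewrite (_ : q.+2 - 2 = q) in hm; last by lia.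
have -> : q.+2 + 1 = q + 3 by lia.
rewrite (_ : q.+2 + 2 = q + 4) in hk; last by lia.
rewrite (_ : q.+2 + 3 = q + 5) in hm; last by lia.
pose fE (i : 'I_(size E)) := nth set0 E i.
have hsz : forall i, i \in [set: 'I_(size E)] -> #|fE i| <= q.+2.
  move=> i _; move/(all_nthP set0): hE => /(_ i (ltn_ord i)) /andP[_].
  by rewrite tq.
have k0 : 0 < k by apply: leq_trans hk; rewrite muln_gt0 expn_gt0 /=; lia.
have hd0 : 0 < 16 * q * lam by rewrite !muln_gt0 /=; lia.
pose u := k %/ (16 * q * lam).
have hu : u <= n by apply: leq_trans (leq_div _ _) hkn.
have [U [cU hlev]] := levels hu hsz.
have u2 : 2 <= u.
  rewrite /u; apply: (@leq_trans ((2 * (16 * q * lam)) %/ (16 * q * lam))); first by rewrite mulnK.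
  apply: leq_div2r.
  apply: leq_trans hk; have := two_q q; rewrite expnD.
  move: (2 ^ q) => z h; rewrite (_ : 2 ^ 4 = 16) //; exact: H1a.
have hceil : k < u.+1 * (16 * q * lam) := ltn_ceil k hd0.
have h2k : 2 * k <= u * 2 ^ (q + 5) * lam.
  have := three_q q; move: hceil u2.
  rewrite (_ : q + 5 = q.+1 + 4) ?expnD; last by lia.
  rewrite (_ : 2 ^ 4 = 16) //; move: (2 ^ q.+1) => z h1 h2 h3.
  have a2 : 2 * u.+1 <= 3 * u by lia.
  have a3 : 2 * k <= 2 * u.+1 * (16 * q * lam) by rewrite -mulnA leq_mul2l /= ltnW.
  apply: (leq_trans a3); apply: (leq_trans (leq_mul a2 (leqnn _))).
  rewrite H2a.
  rewrite H3a.
  by rewrite leq_mul2l h3 orbT.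
have key := key_exp q1 k0 hm h2k.
pose G := [set i in [set: 'I_(size E)] | #|fE i :\: U| <= 2].
have n0 : 0 < n by lia.
have hG : 6 * n <= #|G|.
  move: hlev; rewrite cardsT card_ord => hlev.
  have := leq_trans key hlev; rewrite -/n -/G.
  by rewrite leq_pmul2l // expn_gt0 n0.
set D := k %/ (2 ^ (q + 3) * lam) + 1.
have hP0 : 0 < 2 ^ (q + 3) * lam by rewrite muln_gt0 expn_gt0 /=; lia.
have hA : q * u + (q * u + D) * (4 * lam + 9) <= k.
  apply: (arith1 (P := 2 ^ (q + 3) * lam)) => //.
  - by rewrite /u H4a leq_divM.
  - rewrite /D addnK; exact: leq_divM.
  - rewrite expnD (_ : 2 ^ 3 = 8) //; have := two_q q; move: (2 ^ q) => z h. exact: (H5a lam q1 h).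
  - move: hk; rewrite (_ : q + 4 = (q + 3).+1) ?expnS; last by lia.
    by rewrite mulnA.
  - by rewrite /D addn1.
have hf2 : forall i, i \in G -> #|fE i :\: U| <= 2 by move=> i; rewrite inE => /andP[].
have hGg : 4 * #|V| + 1 + (q * u + D) * (4 * trunc_log 2 #|V| + 8).+1 <= #|G|.
  rewrite -/n -/lam (_ : (4 * lam + 8).+1 = 4 * lam + 9); last by lia.
  move: hA hG hkn; move: ((q * u + D) * (4 * lam + 9)) => z; lia.
have [T [cT sT]] := greedy hf2 hGg.
exists (U :|: T); split.
  apply: leq_trans (leq_card_setU _ _) _.
  move: hA cU cT; rewrite -/n -/lam; move: (q * u + D) => g.
  have : g * (4 * lam + 8) <= g * (4 * lam + 9) by rewrite leq_mul2l; lia.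
  move: (g * (4 * lam + 8)) (g * (4 * lam + 9)) => a b; lia.
rewrite spanned_card.
have hs : [set i in G | fE i :\: U \subset T] \subset
          [set i : 'I_(size E) | nth set0 E i \subset U :|: T].
  apply/subsetP=> i; rewrite !inE => /andP[_ h]; apply/subsetP=> x xf.
  rewrite in_setU; case: (boolP (x \in U)) => //= xU.
  by apply: (subsetP h); rewrite inE xU.
apply: leq_trans (subset_leq_card hs).
move: sT; rewrite /sp; move: (#|[set i in G | fE i :\: U \subset T]|) => z.
move: cU (leq_of_leqif (leq_card_setU U T)); lia.
Qed.
From Stdlib Require Import Lra.

Lemma INR_muln (a b : nat) : INR (a * b) = (INR a * INR b)%R.
Proof. by rewrite mulnE mult_INR. Qed.

Lemma INR_expn (a n : nat) : INR (a ^ n) = (INR a ^ n)%R.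
Proof. elim: n => [|n IH]; first by rewrite expn0. by rewrite expnS INR_muln IH. Qed.

Lemma INR_leq (a b : nat) : a <= b -> (INR a <= INR b)%R.
Proof. by move/leP; apply: le_INR. Qed.

Lemma leq_INR (a b : nat) : (INR a <= INR b)%R -> a <= b.
Proof. by move=> h; apply/leP; apply: INR_le. Qed.

Lemma ln_le' (x y : R) : (0 < x)%R -> (x <= y)%R -> (ln x <= ln y)%R.
Proof.
move=> hx hxy; case: (Rle_lt_or_eq_dec _ _ hxy) => [h|->]; last by apply: Rle_refl.
by apply: Rlt_le; apply: ln_increasing.
Qed.

Lemma ln2_pos : (0 < ln 2)%R.
Proof. rewrite -ln_1; apply: ln_increasing; lra. Qed.

Lemma div_le (a b c : R) : (0 < b)%R -> (a <= c * b)%R -> (a / b <= c)%R.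
Proof.
move=> hb h; apply: (Rmult_le_reg_r b) => //.
rewrite /Rdiv Rmult_assoc Rinv_l; [lra | lra].
Qed.

Lemma le_div (a b c : R) : (0 < b)%R -> (c * b <= a)%R -> (c <= a / b)%R.
Proof.
move=> hb h; apply: (Rmult_le_reg_r b) => //.
rewrite /Rdiv Rmult_assoc Rinv_l; [lra | lra].
Qed.

Lemma log2_ge (s e : nat) : 0 < s -> 2 ^ e <= s -> (INR e <= log2 (INR s))%R.
Proof.
move=> s0 h; rewrite /log2; apply: le_div; first exact: ln2_pos.
rewrite -ln_pow; last lra.
apply: ln_le'; first by apply: pow_lt; lra.
have := INR_leq h; rewrite INR_expn.
by rewrite (_ : INR 2 = 2%R) //; rewrite /INR; lra.
Qed.
Lemma INR2 : INR 2 = 2%R. Proof. by rewrite INR_IZR_INZ. Qed.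
Lemma INR3 : INR 3 = 3%R. Proof. by rewrite INR_IZR_INZ. Qed.
Lemma INR32 : INR 32 = 32%R. Proof. by rewrite INR_IZR_INZ. Qed.

Theorem theorem1p2 (t : nat) (V : finType) (E : seq {set V}) (k : nat) :
  3 <= t ->
  is_t_hypergraph t E ->
  2 <= #|V| ->
  (2 ^ (t + 2) * log2 (INR #|V|) <= INR k)%R ->
  k <= #|V| ->
  (3 * INR #|V| * (2 ^ (t + 3) * INR #|V| * log2 (INR #|V|) / INR k) ^ (t - 2)
     <= INR (size E))%R ->
  exists S : {set V},
    #|S| <= k /\
    (INR #|S| + INR k / (2 ^ (t + 1) * log2 (INR #|V|)) <= INR (spanned E S))%R.
Proof.
move=> ht hE hs hk hkn hm.
have s0 : 0 < #|V| by apply: leq_trans hs.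
have hlamL : (INR (trunc_log 2 #|V|) <= log2 (INR #|V|))%R.
  exact: log2_ge s0 (trunc_logP (ltnSn 1) s0).
have hL1 : (1 <= log2 (INR #|V|))%R.
  by have := log2_ge s0 (e := 1) hs; rewrite /= .
have h2t : (32 <= 2 ^ (t + 2))%R.
  have -> : 32%R = (2 ^ 5)%R by simpl; lra.
  apply: Rle_pow; first lra.
  by apply/leP; rewrite addn2.
have kR : (32 <= INR k)%R by nra.
have k32 : 32 <= k by apply: leq_INR; rewrite INR32.
have lam5 : 5 <= trunc_log 2 #|V|.
  by apply: trunc_log_max => //; apply: leq_trans k32 hkn.
have hk' : 2 ^ (t + 2) * trunc_log 2 #|V| <= k.
  apply: leq_INR; rewrite INR_muln INR_expn INR2.
  apply: Rle_trans hk; apply: Rmult_le_compat_l => //.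
  by apply: pow_le; lra.
have hm' : 3 * #|V| * (2 ^ (t + 3) * #|V| * trunc_log 2 #|V|) ^ (t - 2) <=
           size E * k ^ (t - 2).
  apply: leq_INR; rewrite !INR_muln !INR_expn !INR_muln INR_expn INR2 INR3.
  set q := (t - 2).
  set x := (2 ^ (t + 3) * INR #|V| * INR (trunc_log 2 #|V|))%R.
  set y := (2 ^ (t + 3) * INR #|V| * log2 (INR #|V|))%R in hm.
  have p2 : (0 <= 2 ^ (t + 3))%R by apply: pow_le; lra.
  have sR : (0 <= INR #|V|)%R by apply: pos_INR.
  have lR : (0 <= INR (trunc_log 2 #|V|))%R by apply: pos_INR.
  have x0 : (0 <= x)%R by rewrite /x; apply: Rmult_le_pos => //; apply: Rmult_le_pos.
  have xy : (x <= y)%R.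
    by rewrite /x /y; apply: Rmult_le_compat_l => //; apply: Rmult_le_pos.
  have kp : (0 < INR k)%R by lra.
  have hxy : ((x / INR k) ^ q <= (y / INR k) ^ q)%R.
    apply: pow_incr; split.
      by apply: Rmult_le_pos => //; apply: Rlt_le; apply: Rinv_0_lt_compat.
    by apply: Rmult_le_compat_r => //; apply: Rlt_le; apply: Rinv_0_lt_compat.
  have h3 : (3 * INR #|V| * (x / INR k) ^ q <= INR (size E))%R.
    apply: Rle_trans hm; apply: Rmult_le_compat_l => //; lra.
  have kq : (0 < INR k ^ q)%R by apply: pow_lt.
  move: h3; rewrite /Rdiv Rpow_mult_distr pow_inv => h3.
  have := Rmult_le_compat_r (INR k ^ q) _ _ (Rlt_le _ _ kq) h3.
  rewrite !Rmult_assoc Rinv_l; last lra.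
  by rewrite Rmult_1_r -!Rmult_assoc.
have [S [cS sS]] := main_nat ht hE hkn lam5 hk' hm'.
exists S; split=> //.
set X := 2 ^ (t + 1) * trunc_log 2 #|V|.
have X0 : 0 < X by rewrite /X muln_gt0 expn_gt0 /=; apply: leq_trans lam5.
have hD := ltn_ceil k X0.
have hsR : (INR #|S| + INR (k %/ X + 1) <= INR (spanned E S))%R.
  by rewrite -plus_INR -addnE; apply: INR_leq.
have LP : (0 < 2 ^ (t + 1) * log2 (INR #|V|))%R.
  by apply: Rmult_lt_0_compat; [apply: pow_lt; lra | lra].
have : (INR k / (2 ^ (t + 1) * log2 (INR #|V|)) <= INR (k %/ X + 1))%R.
  apply: div_le => //.
  have := INR_leq (ltnW hD); rewrite INR_muln /X INR_muln INR_expn INR2 -addn1 => h.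
  apply: Rle_trans h _; apply: Rmult_le_compat_l; first exact: pos_INR.
  by apply: Rmult_le_compat_l => //; apply: pow_le; lra.
lra.
Qed.
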